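(* Consider a multivariate exponential family of pdfs or pmfs $$f(\boldsymbol{x},\boldsymbol{\theta})=v(\boldsymbol{x})\exp\big(\boldsymbol{\eta}(\boldsymbol{\theta})*\boldsymbol{u}(\boldsymbol{x})-\zeta(\boldsymbol{\theta})\big),\qquad\boldsymbol{\theta}\in\Theta,$$ where $\boldsymbol{x},\boldsymbol{\theta}$ are column vectors, $\boldsymbol{\eta}(\boldsymbol{\theta})$ and $\boldsymbol{u}(\boldsymbol{x})$ are column-vector functions, $\zeta(\boldsymbol{\theta})$ and $v(\boldsymbol{x})$ are scalar functions, $*$ denotes the inner product, and $\boldsymbol{\eta},\zeta$ are differentiable in $\boldsymbol{\theta}$. Let $\boldsymbol{X}_1,\dots,\boldsymbol{X}_n$ be i.i.d. random vectors with common pdf or pmf $f(\cdot,\boldsymbol{\theta})$, and let $\boldsymbol{Z}=\frac1n\sum_{i=1}^n\boldsymbol{u}(\boldsymbol{X}_i)$. For $\boldsymbol{\theta},\boldsymbol{\vartheta}\in\Theta$ and a vector $\boldsymbol{z}$ of the same size as $\boldsymbol{Z}$ define $\rho(\boldsymbol{z},\boldsymbol{\vartheta})=[\boldsymbol{\eta}(\boldsymbol{\theta})-\boldsymbol{\eta}(\boldsymbol{\vartheta})]*\boldsymbol{z}-\zeta(\boldsymbol{\theta})+\zeta(\boldsymbol{\vartheta})$, and let $\mathscr{A}_{\boldsymbol{\theta}}=\{\boldsymbol{\vartheta}\in\Theta:\boldsymbol{\eta}(\boldsymbol{\vartheta})\le\boldsymbol{\eta}(\boldsymbol{\theta})\}$,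 $\mathscr{B}_{\boldsymbol{\theta}}=\{\boldsymbol{\vartheta}\in\Theta:\boldsymbol{\eta}(\boldsymbol{\vartheta})\ge\boldsymbol{\eta}(\boldsymbol{\theta})\}$. Then $$\Pr\{\boldsymbol{Z}\le\boldsymbol{z}\mid\boldsymbol{\theta}\}\le\inf_{\boldsymbol{\vartheta}\in\mathscr{A}_{\boldsymbol{\theta}}}\exp(n\rho(\boldsymbol{z},\boldsymbol{\vartheta}))\Pr\{\boldsymbol{Z}\le\boldsymbol{z}\mid\boldsymbol{\vartheta}\}\le\inf_{\boldsymbol{\vartheta}\in\mathscr{A}_{\boldsymbol{\theta}}}\exp(n\rho(\boldsymbol{z},\boldsymbol{\vartheta})),$$ $$\Pr\{\boldsymbol{Z}\ge\boldsymbol{z}\mid\boldsymbol{\theta}\}\le\inf_{\boldsymbol{\vartheta}\in\mathscr{B}_{\boldsymbol{\theta}}}\exp(n\rho(\boldsymbol{z},\boldsymbol{\vartheta}))\Pr\{\boldsymbol{Z}\ge\boldsymbol{z}\mid\boldsymbol{\vartheta}\}\le\inf_{\boldsymbol{\vartheta}\in\mathscr{B}_{\boldsymbol{\theta}}}\exp(n\rho(\boldsymbol{z},\boldsymbol{\vartheta})).$$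
   Context: $\Pr\{E\mid\boldsymbol{\theta}\}$ denotes the probability of the event $E$ when the $\boldsymbol{X}_i$ are i.i.d. with pdf or pmf $f(\cdot,\boldsymbol{\theta})$. For vectors, $\boldsymbol{V}_1\le\boldsymbol{V}_2$ (resp. $\ge$) means componentwise inequality. *)

(* Defs.v *)
From HB Require Import structures.
From mathcomp Require Import all_boot all_order all_algebra.
From mathcomp Require Import all_classical all_reals all_analysis.
Set Implicit Arguments. Unset Strict Implicit. Unset Printing Implicit Defensive.
Import Order.TTheory GRing.Theory Num.Theory.
Import numFieldNormedType.Exports.
Local Open Scope classical_set_scope.
Local Open Scope ring_scope.

Definition dotv (R : pzRingType) (k : nat) (a b : 'cV[R]_k) : R :=
  \sum_(i < k) a i 0 * b i 0.

Definition leV (R : realDomainType) (k : nat) (a b : 'cV[R]_k) : bool :=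
  [forall i, a i 0 <= b i 0].

Definition expfam (R : realType) (T P : Type) (k : nat) (v : T -> R)
  (u : T -> 'cV[R]_k) (eta : P -> 'cV[R]_k) (zeta : P -> R) (x : T) (th : P) : R :=
  v x * expR (dotv (eta th) (u x) - zeta th).

Definition meanstat (R : realType) (T : Type) (k n : nat) (u : T -> 'cV[R]_k)
  (s : seq T) : 'cV[R]_k := n%:R^-1 *: \sum_(x <- s) u x.

(* n-fold iterated integral w.r.t. mu of a function of a sample of size n:
   integrates (x_1, ..., x_n) w.r.t. mu (x) ... (x) mu (Tonelli). *)
Fixpoint iter_integral (R : realType) (d : measure_display) (T : measurableType d)
  (mu : {measure set T -> \bar R}) (n : nat) (g : seq T -> \bar R) : \bar R :=
  match n with
  | 0 => g [::]
  | n'.+1 => (\int[mu]_x iter_integral mu n' (fun s => g (x :: s)))%E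
  end.

(* Pr{ E(X_1,...,X_n) | theta } when X_1,...,X_n are iid with density f(., theta)
   with respect to mu. *)
Definition prob_iid (R : realType) (d : measure_display) (T : measurableType d)
  (P : Type) (mu : {measure set T -> \bar R}) (n : nat) (f : T -> P -> R)
  (E : seq T -> bool) (th : P) : \bar R :=
  iter_integral mu n (fun s => ((E s)%:R * \prod_(x <- s) f x th)%:E).

Definition rho (R : realType) (P : Type) (k : nat) (eta : P -> 'cV[R]_k)
  (zeta : P -> R) (th : P) (z : 'cV[R]_k) (vth : P) : R :=
  dotv (eta th - eta vth) z - zeta th + zeta vth.

(* Main.v *)
Require Import Defs.
From HB Require Import structures.
From mathcomp Require Import all_boot all_order all_algebra.
From mathcomp Require Import all_classical all_reals all_analysis.
Import Order.TTheory GRing.Theory Num.Theory.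
Import numFieldNormedType.Exports.
Local Open Scope classical_set_scope.
Local Open Scope ring_scope.
Import HBNNSimple.
From mathcomp Require Import ring lra.

Section S.
Local Open Scope ereal_scope.
Context d (T : measurableType d) (R : realType) (mu : {measure set T -> \bar R}).

Lemma int_mono (F G : T -> \bar R) : (forall x, 0 <= F x) -> (forall x, F x <= G x) ->
  \int[mu]_x F x <= \int[mu]_x G x.
Proof.
move=> F0 FG.
have G0 x : 0 <= G x by apply: le_trans (F0 x) (FG x).
rewrite !ge0_integralTE//; apply: ge_ereal_sup => _ [h hle <-].
apply: ereal_sup_ubound; exists h => //= x; exact: le_trans (hle x) (FG x).
Qed.

Lemma int_scale (F : T -> \bar R) (c : R) : (0 <= c)%R -> (forall x, 0 <= F x) ->
  \int[mu]_x (c%:E * F x) <= c%:E * \int[mu]_x F x.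
Proof.
move=> c0 F0; have [->|cn0] := eqVneq c 0%R.
  rewrite mul0e; under eq_integral do rewrite mul0e; by rewrite integral0.
have cp : (0 < c)%R by rewrite lt_neqAle eq_sym cn0.
have cF0 x : 0 <= c%:E * F x by rewrite mule_ge0.
rewrite !ge0_integralTE//; apply: ge_ereal_sup => _ [h hle <-].
have ic0 : (0 <= c^-1)%R by rewrite invr_ge0.
pose h' := scale_nnsfun h ic0.
have -> : sintegral mu h = c%:E * sintegral mu h'.
  rewrite /h' /scale_nnsfun /= sintegralrM muleA -EFinM divff// mul1e.
  done.
rewrite lee_pmul2l ?lte_fin//; first last.
apply: ereal_sup_ubound; exists h' => //= x.
rewrite /h' /=.
rewrite -(@lee_pmul2l _ c%:E) ?lte_fin// -EFinM mulrA divff// mul1r; exact: hle x.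
Qed.

Lemma iter_ge0 n (g : seq T -> \bar R) : (forall s, 0 <= g s) -> 0 <= iter_integral mu n g.
Proof.
elim: n g => [|n IH] g g0 /=; first exact: g0.
by apply: integral_ge0 => x _; apply: IH.
Qed.

Lemma iter_le n (a b : seq T -> R) (c : R) : (0 <= c)%R ->
  (forall s, 0 <= a s)%R -> (forall s, 0 <= b s)%R ->
  (forall s, size s = n -> a s <= c * b s)%R ->
  iter_integral mu n (fun s => (a s)%:E) <= c%:E * iter_integral mu n (fun s => (b s)%:E).
Proof.
move=> c0; elim: n a b => [|n IH] a b a0 b0 ab /=.
  by rewrite -EFinM lee_fin; apply: ab.
apply: (@le_trans _ _ (\int[mu]_x (c%:E * iter_integral mu n (fun s => (b (x :: s))%:E)))).
  apply: int_mono => x; first by apply: iter_ge0 => s; rewrite lee_fin.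
  by apply: IH => // s sn; apply: ab; rewrite /= sn.
by apply: int_scale => // x; apply: iter_ge0 => s; rewrite lee_fin.
Qed.

Lemma iter_le1 n (a : seq T -> R) (f : T -> R) (c : R) : (0 <= c)%R ->
  (forall x, 0 <= f x)%R -> \int[mu]_x (f x)%:E = 1 ->
  (forall s, 0 <= a s)%R -> (forall s, a s <= c * \prod_(x <- s) f x)%R ->
  iter_integral mu n (fun s => (a s)%:E) <= c%:E.
Proof.
move=> + f0 f1; elim: n a c => [|n IH] a c c0 a0 ab /=.
  by rewrite lee_fin; have := ab [::]; rewrite big_nil mulr1.
apply: (@le_trans _ _ (\int[mu]_x (c%:E * (f x)%:E))).
  apply: int_mono => x; first by apply: iter_ge0 => s; rewrite lee_fin.
  rewrite -EFinM; apply: IH => //; first by rewrite mulr_ge0.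
  by move=> s; by rewrite -mulrA; have := ab (x :: s); rewrite big_cons.
apply: le_trans (@int_scale (fun x => (f x)%:E) c c0 _) _ => [x|]; first by rewrite lee_fin.
by rewrite f1 mule1.
Qed.
End S.

Section Alg.
Context {R : realType} {k : nat}.
Implicit Types a b c : 'cV[R]_k.

Lemma dotvDr a b c : dotv a (b + c) = dotv a b + dotv a c.
Proof. by rewrite /dotv -big_split; apply: eq_bigr => i _; rewrite mxE mulrDr. Qed.

Lemma dotvBl a b c : dotv (a - b) c = dotv a c - dotv b c.
Proof. by rewrite /dotv -sumrB; apply: eq_bigr => i _; rewrite !mxE mulrBl. Qed.

Lemma dotv0r a : dotv a 0 = 0.
Proof. by rewrite /dotv big1 // => i _; rewrite mxE mulr0. Qed.

Lemma dotvZr a (r : R) b : dotv a (r *: b) = r * dotv a b.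
Proof. by rewrite /dotv mulr_sumr; apply: eq_bigr => i _; rewrite mxE mulrCA. Qed.

Lemma dotv_le a b c : leV 0 a -> leV b c -> dotv a b <= dotv a c.
Proof.
move=> /forallP a0 /forallP bc; apply: ler_sum => i _.
by apply: ler_wpM2l; [have := a0 i; rewrite mxE|apply: bc].
Qed.
End Alg.

Lemma leV_sub {R : realType} {k} (a b : 'cV[R]_k) : leV a b -> leV 0 (b - a).
Proof. by move=> /forallP ab; apply/forallP => i; rewrite !mxE subr_ge0. Qed.

Lemma prod_expfam (R : realType) (T P : Type) (k : nat) (v : T -> R)
  (u : T -> 'cV[R]_k) (eta : P -> 'cV[R]_k) (zeta : P -> R) (s : seq T) (th vth : P) :
  \prod_(x <- s) expfam v u eta zeta x th =
  expR (dotv (eta th - eta vth) (\sum_(x <- s) u x) + (size s)%:R * (zeta vth - zeta th))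
  * \prod_(x <- s) expfam v u eta zeta x vth.
Proof.
elim: s => [|x s IH]; first by rewrite !big_nil dotv0r mul0r addr0 expR0 mulr1.
rewrite !big_cons IH dotvDr /= /expfam.
set A := dotv (eta th - eta vth) (u x); set B := dotv _ (\sum_(_ <- _) _).
set C := dotv (eta th) (u x); set D := dotv (eta vth) (u x).
set Q := \prod_(_ <- _) _.
have E : expR (C - zeta th) * expR (B + (size s)%:R * (zeta vth - zeta th)) =
  expR (A + B + (size s).+1%:R * (zeta vth - zeta th)) * expR (D - zeta vth).
  rewrite -!expRD; congr expR; rewrite /A dotvBl -/C -/D -addn1 natrD; ring.
transitivity (v x * (expR (C - zeta th) * expR (B + (size s)%:R * (zeta vth - zeta th))) * Q); first ring.
rewrite E; ring.
Qed.

Theorem theorem4 (R : realType) (d : measure_display) (T : measurableType d)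
  (mu : {measure set T -> \bar R}) (k m : nat) (Theta : set 'cV[R]_m)
  (v : T -> R) (u : T -> 'cV[R]_k) (eta : 'cV[R]_m -> 'cV[R]_k)
  (zeta : 'cV[R]_m -> R) (n : nat) :
  (0 < n)%N ->
  (forall x, 0 <= v x) ->
  measurable_fun setT v ->
  (forall i, measurable_fun setT (fun x => u x i 0)) ->
  (forall th, Theta th -> differentiable eta th /\ differentiable zeta th) ->
  (forall th, Theta th ->
     (\int[mu]_x (expfam v u eta zeta x th)%:E = 1)%E) ->
  forall (th : 'cV[R]_m) (z : 'cV[R]_k), Theta th ->
  let f := expfam v u eta zeta in
  let Z := meanstat n u in
  let A := [set vth | Theta vth /\ leV (eta vth) (eta th)] in
  let B := [set vth | Theta vth /\ leV (eta th) (eta vth)] in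
  let PrLe := prob_iid mu n f (fun s => leV (Z s) z) in
  let PrGe := prob_iid mu n f (fun s => leV z (Z s)) in
  let w := fun vth => expR (n%:R * rho eta zeta th z vth) in
  ((PrLe th <= ereal_inf [set (w vth)%:E * PrLe vth | vth in A])%E /\
   (ereal_inf [set (w vth)%:E * PrLe vth | vth in A]
      <= ereal_inf [set (w vth)%:E | vth in A])%E) /\
  ((PrGe th <= ereal_inf [set (w vth)%:E * PrGe vth | vth in B])%E /\
   (ereal_inf [set (w vth)%:E * PrGe vth | vth in B]
      <= ereal_inf [set (w vth)%:E | vth in B])%E).
Proof.
move=> n0 v0 _ _ _ int1 th z Tth f Z A B PrLe PrGe w.
have f0 x p : 0 <= f x p by rewrite /f /expfam mulr_ge0 ?expR_ge0.
have nR : (n%:R : R) != 0 by rewrite pnatr_eq0 -lt0n.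
have gen : forall (E : seq T -> bool) (S : set 'cV[R]_m),
   (forall vth, S vth -> Theta vth) ->
   (forall vth s, S vth -> size s = n -> E s ->
      rho eta zeta th (Z s) vth <= rho eta zeta th z vth) ->
   ((prob_iid mu n f E th <= ereal_inf [set (w vth)%:E * prob_iid mu n f E vth | vth in S])%E /\
   (ereal_inf [set (w vth)%:E * prob_iid mu n f E vth | vth in S]
      <= ereal_inf [set (w vth)%:E | vth in S])%E).
  move=> E S ST Sle; split.
    apply: le_ereal_inf_tmp => _ [vth Sv <-].
    apply: iter_le.
    - by rewrite expR_ge0.
    - by move=> s; rewrite mulr_ge0 ?ler0n ?prodr_ge0.
    - by move=> s; rewrite mulr_ge0 ?ler0n ?prodr_ge0.
    move=> s sn; case Es: (E s); last by rewrite !mul0r mulr0.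
    rewrite !mul1r /f (@prod_expfam _ _ _ _ v u eta zeta s th vth) sn.
    apply: ler_wpM2r; first by rewrite prodr_ge0.
    rewrite ler_expR /w.
    have -> : dotv (eta th - eta vth) (\sum_(x <- s) u x) + n%:R * (zeta vth - zeta th)
       = n%:R * rho eta zeta th (Z s) vth.
      rewrite /rho /Z /meanstat dotvZr !mulrDr mulrA divff // mul1r; ring.
    by apply: ler_wpM2l; [exact: ler0n | exact: Sle].
  apply: le_ereal_inf_tmp => _ [vth Sv <-].
  apply: ge_ereal_inf; exists ((w vth)%:E * prob_iid mu n f E vth)%E; first by exists vth.
  rewrite -[X in (_ <= X)%E]mule1; apply: lee_wpmul2l; first by rewrite lee_fin expR_ge0.
  rewrite -[X in (_ <= X)%E]/(1%R%:E).
  apply: (@iter_le1 _ _ _ mu n _ (f^~ vth)) => //.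
  - exact: int1 (ST _ Sv).
  - by move=> s; rewrite mulr_ge0 ?ler0n ?prodr_ge0.
  - by move=> s; case: (E s); rewrite ?mul0r ?mul1r ?prodr_ge0.
split; apply: gen; try by move=> ? [].
  move=> vth s [_ le] _ Es; rewrite /rho lerD2r lerD2r.
  by apply: dotv_le; [apply: leV_sub|].
move=> vth s [_ le] _ Es; rewrite /rho lerD2r lerD2r.
have := dotv_le _ _ _ (leV_sub _ _ le) Es; rewrite !dotvBl; lra.
Qed.
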